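(* Let $\tilde L$ be a minimum-size counterexample. Then there are no elements $m,j\in\tilde L$ with $m$ meet-irreducible, $j$ join-irreducible, and $m<j$.
   Context: For a poset $P$, $x$ upper covers $y$ (and $y$ lower covers $x$) if $y<x$ with nothing strictly between. Join-irreducible: upper covers exactly one element; meet-irreducible: lower covers exactly one element. For $x\in P$, ${\uparrow}x=\{y: x\le y\}$. A counterexample is a finite lattice $L$ with $|L|>1$ in which every join-irreducible $j$ satisfies $|{\uparrow}j|>|L|/2$; a minimum-size counterexample is a counterexample $\tilde L$ such that no counterexample has fewer elements. *)

(* Defs.v *)
From HB Require Import structures.
From mathcomp Require Import all_boot all_order.
Set Implicit Arguments. Unset Strict Implicit. Unset Printing Implicit Defensive.
Import Order.TTheory.
Local Open Scope order_scope.

Definition covers {d} {P : finPOrderType d} (x y : P) : bool :=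
  (y < x) && [forall z : P, ~~ ((y < z) && (z < x))].

Definition join_irr {d} {P : finPOrderType d} (j : P) : bool :=
  #|[set y : P | covers j y]| == 1%N.

Definition meet_irr {d} {P : finPOrderType d} (m : P) : bool :=
  #|[set y : P | covers y m]| == 1%N.

Definition upset {d} {P : finPOrderType d} (x : P) : {set P} :=
  [set y : P | x <= y].

(* counterexample: |L| > 1 and every join-irreducible j has |up j| > |L|/2,
   written without division as 2 * |up j| > |L|. *)
Definition counterexample {d} (L : finLatticeType d) : Prop :=
  (1 < #|L|)%N /\ forall j : L, join_irr j -> (#|L| < 2 * #|upset j|)%N.

Definition min_counterexample {d} (L : finLatticeType d) : Prop :=
  counterexample L /\
  forall (d' : Order.disp_t) (L' : finLatticeType d'),
    counterexample L' -> (#|L| <= #|L'|)%N.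

(* Main.v *)
From HB Require Import structures.
Require Import Defs.
From mathcomp Require Import all_boot all_order zify.
Set Implicit Arguments. Unset Strict Implicit. Unset Printing Implicit Defensive.
Import Order.TTheory.
Local Open Scope order_scope.

Lemma cover_below d (P : finPOrderType d) (y : P) :
  forall n (z : P), (#|[set w : P | (w < z)%O]| < n)%N -> y < z ->
  exists c, covers c y && (c <= z).
Proof.
elim => [|n IH] z //.
rewrite ltnS => hn yz.
case: (boolP [exists w : P, (y < w) && (w < z)]).
  case/existsP => w /andP [yw wz].
  have [c /andP [cc cw]] : exists c, covers c y && (c <= w).
    apply: (IH w) => //; apply: leq_trans hn.
    apply: proper_card; apply/properP; split.
      by apply/subsetP => v; rewrite !inE => vw; apply: lt_trans vw wz.
    by exists w; rewrite !inE ?ltxx.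
  by exists c; rewrite cc (le_trans cw) // ltW.
rewrite negb_exists => /forallP h.
by exists z; rewrite /covers yz lexx andbT /=; apply/forallP.
Qed.

Section Rem.
Variables (d : Order.disp_t) (L : finLatticeType d) (m ms : L).
Hypothesis mltms : m < ms.
Hypothesis msmin : forall z, m < z -> ms <= z.

Definition U := {x : L | x != m}.
HB.instance Definition _ := Finite.on U.
HB.instance Definition _ := [isSub for (@sval L (fun x => x != m) : U -> L)].
HB.instance Definition _ := [SubChoice_isSubPOrder of U by <: with d].

Lemma leUE (x y : U) : (x <= y) = (val x <= val y).
Proof. by []. Qed.

Lemma ms_neq : ms != m. Proof. by rewrite gt_eqF. Qed.
Definition msU : U := exist _ ms ms_neq.
Definition meetU (x y : U) : U := odflt msU (insub (val x `&` val y)).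
Definition joinU (x y : U) : U := odflt msU (insub (val x `|` val y)).

Lemma meetUP (x y z : U) : (x <= meetU y z) = (x <= y) && (x <= z).
Proof.
rewrite /meetU !leUE; case: insubP => [u _ -> //|]; first by rewrite lexI.
rewrite negbK => /eqP E; exfalso.
have hy : m < val y by rewrite lt_def (valP y) /= -[X in X <= _]E leIl.
have hz : m < val z by rewrite lt_def (valP z) /= -[X in X <= _]E leIr.
have : ms <= m by rewrite -[X in _ <= X]E lexI !msmin.
by move=> h; have := lt_le_trans mltms h; rewrite ltxx.
Qed.

Lemma joinUP (x y z : U) : (joinU x y <= z) = (x <= z) && (y <= z).
Proof.
rewrite /joinU !leUE; case: insubP => [u _ -> //|]; first by rewrite leUx.
rewrite negbK => /eqP E /=; rewrite -leUx E.
apply/idP/idP => [h|h]; first exact: le_trans (ltW mltms) h.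
by apply: msmin; rewrite lt_def h (valP z).
Qed.

HB.instance Definition _ := Order.POrder_MeetJoin_isLattice.Build d U meetUP joinUP.

Lemma ltUE (x y : U) : (x < y) = (val x < val y).
Proof. by []. Qed.

Hypothesis mscov : covers ms m.
Hypothesis msuniq : forall y, covers y m -> y = ms.

Lemma coversU (x y : U) : (m < val x -> ms < val x) ->
  covers x y = covers (val x) (val y).
Proof.
move=> hx; rewrite /covers ltUE; case: (boolP (val y < val x)) => //= yx.
apply/forallP/forallP => h w.
  case: (eqVneq w m) => [->|wm].
    apply/negP => /andP [ym mx].
    have := h msU; rewrite !ltUE /= (lt_trans ym mltms) hx //.
  by have := h (exist _ w wm).
by have := h (val w); rewrite !ltUE.
Qed.

Lemma card_up (x : U) :
  #|upset x| = #|[set b : L | (val x <= b) && (b != m)]|.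
Proof.
rewrite -(card_imset _ val_inj); apply: eq_card => b.
rewrite inE; apply/imsetP/idP => [[y]|/andP [xb bm]].
  by rewrite /upset inE leUE => xy ->; rewrite xy (valP y).
by exists (exist _ b bm); rewrite // /upset inE leUE.
Qed.

Lemma join_irrU (x : U) : val x != ms -> ~~ (val x <= m) ->
  join_irr x -> join_irr (val x).
Proof.
move=> xms xm; rewrite /join_irr; move/eqP => <-; apply/eqP.
rewrite -(card_imset _ val_inj); apply: eq_card => b.
have hx : m < val x -> ms < val x.
  by move=> mx; rewrite lt_def xms msmin.
rewrite inE; apply/idP/imsetP => [cb|[y]]; last first.
  by rewrite inE coversU // => ? ->.
have bm : b != m.
  apply/eqP => bm; move: cb; rewrite bm => /msuniq E.
  by rewrite E eqxx in xms.
by exists (exist _ b bm); rewrite // inE coversU.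
Qed.

Lemma card_U : #|{: U}| = #|L|.-1.
Proof. by rewrite card_sig cardC1. Qed.
Variable j : L.
Hypothesis mj : m < j.
Hypothesis jirr : join_irr j.
Hypothesis HL : counterexample L.

Lemma U_counter : counterexample U.
Proof.
have msj : ms <= j := msmin mj.
case: HL => n1 Hj; have hJ := Hj j jirr.
have uN : (#|upset j| < #|L|)%N.
  apply: proper_card; apply/properP; split; first exact: subset_predT.
  by exists m; rewrite // /upset inE; apply/negP => h; have := lt_le_trans mj h; rewrite ltxx.
split; first by rewrite card_U; lia.
move=> x jx; rewrite card_up card_U.
case: (boolP (val x <= j)) => xj.
  have : (#|upset j| <= #|[set b : L | (val x <= b)%O && (b != m)]|)%N.
    apply: subset_leq_card; apply/subsetP => b; rewrite /upset !inE => jb.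
    rewrite (le_trans xj jb) /=; apply/eqP => bm.
    by move: jb; rewrite bm => h; have := lt_le_trans mj h; rewrite ltxx.
  lia.
have xm : ~~ (val x <= m).
  by apply: contra xj => h; apply: le_trans h (ltW mj).
have xms : val x != ms.
  by apply: contra xj => /eqP ->.
have := Hj _ (join_irrU xms xm jx).
have -> : [set b : L | (val x <= b) && (b != m)] = upset (val x).
  apply/setP => b; rewrite /upset !inE; case: (boolP (val x <= b)) => //= xb.
  by apply/eqP => bm; rewrite bm in xb; rewrite xb in xm.
by move=> h; apply: leq_ltn_trans h; apply: leq_pred.
Qed.

End Rem.

Theorem theorem2p3 (d : Order.disp_t) (L : finLatticeType d) :
  min_counterexample L ->
  ~ (exists m j : L, [/\ meet_irr m, join_irr j & m < j]).
Proof.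
move=> [HL Hmin] [m [j [mirr jirr mj]]].
have [ms Ems] := cards1P mirr.
have mscov : covers ms m.
  by move: (set11 ms); rewrite -Ems inE.
have msuniq : forall y, covers y m -> y = ms.
  move=> y cy; have : y \in [set y | covers y m] by rewrite inE.
  by rewrite Ems => /set1P.
have mltms : m < ms by case/andP: mscov.
have msmin : forall z, m < z -> ms <= z.
  move=> z mz.
  have [c /andP [cc cz]] := @cover_below _ _ m (#|[set w : L | (w < z)%O]|.+1) z (ltnSn _) mz.
  by rewrite -(msuniq _ cc).
have := Hmin _ _ (U_counter mltms msmin mscov msuniq mj jirr HL).
rewrite card_U; case: HL => n1 _.
by case: #|L| n1 => // n _; rewrite ltnn.
Qed.
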